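(* Let $n\ge4$, $r_1,r_2,r_3\in\mathbb{Z}_+$ with $r_1+r_2+r_3=n-1$, and let $-1<\alpha_1<1$, $0\le\alpha_2,\alpha_3<1$ with $\alpha_1+\alpha_2+\alpha_3=1$, $r_1-1+\alpha_1\ge r_2+\alpha_2$ and $r_1-1+\alpha_1\ge r_3+1+\alpha_3$. Then $$\mathfrak{L}_n(r_1-1,r_2,r_3+1,\alpha_1,\alpha_2,\alpha_3)\le \mathfrak{L}_n(r_1,r_2,r_3,\alpha_1,\alpha_2,\alpha_3)+2^{r_2+r_3+2}+\frac{2^{r_2}}{r_1}-1+\begin{cases}2^{r_3}, & r_2\ge1,\\ 2^{r_3+1}\ln n, & r_2=0.\end{cases}$$
   Context: Points of a triangle are identified with barycentric coordinates $\lambda=(\lambda_1,\lambda_2,\lambda_3)$, $\lambda_r\ge0$, $\sum\lambda_r=1$. For an integer $n\ge1$ let $I=\{i=(i_1,i_2,i_3)\in\mathbb{Z}_+^3: i_1+i_2+i_3=n\}$, and let $l_i(\lambda)=\prod_{s=1}^{3}\frac{1}{i_s!}\prod_{t=0}^{i_s-1}(n\lambda_s-t)$ (the Lagrange fundamental polynomials for the equally spaced nodes $i/n$, $i\in I$). The Lebesgue function is $\mathcal{L}_n(\lambda)=\sum_{i\in I}|l_i(\lambda)|$. For $r_s\in\mathbb{Z}_+$ with $r_1+r_2+r_3=n-1$ and reals $\alpha_s$ with $\alpha_1+\alpha_2+\alpha_3=1$, write $\mathfrak{L}_n(r_1,r_2,r_3,\alpha_1,\alpha_2,\alpha_3)=\mathcal{L}_n(\lambda)$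 where $\lambda_s=(r_s+\alpha_s)/n$, $s=1,2,3$. *)

(* Defs.v *)
From Stdlib Require Import Arith Reals List.
Import ListNotations.
Open Scope R_scope.

Fixpoint falling (x : R) (k : nat) : R :=
  match k with
  | O => 1
  | S k' => falling x k' * (x - INR k')
  end.

Definition lag_factor (x : R) (k : nat) : R := falling x k / INR (fact k).

Definition lagrange_fund (n i1 i2 i3 : nat) (l1 l2 l3 : R) : R :=
  lag_factor (INR n * l1) i1 * lag_factor (INR n * l2) i2
  * lag_factor (INR n * l3) i3.

Definition lebesgue_fun (n : nat) (l1 l2 l3 : R) : R :=
  fold_right Rplus 0
    (map (fun i1 =>
       fold_right Rplus 0
         (map (fun i2 => Rabs (lagrange_fund n i1 i2 (n - i1 - i2)%nat l1 l2 l3))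
              (seq 0 (S (n - i1)))))
       (seq 0 (S n))).

Definition frakL (n r1 r2 r3 : nat) (a1 a2 a3 : R) : R :=
  lebesgue_fun n ((INR r1 + a1) / INR n) ((INR r2 + a2) / INR n)
    ((INR r3 + a3) / INR n).

(* Main.v *)
Require Import Defs.
From Stdlib Require Import Reals.
Open Scope R_scope.
From Stdlib Require Import Arith Reals Lra Lia List.
Import ListNotations.
Open Scope R_scope.

Fixpoint sm (f : nat -> R) (K : nat) : R :=
  match K with O => 0 | S K' => sm f K' + f K' end.

Lemma fr_shift (l : list R) (c : R) : fold_right Rplus c l = fold_right Rplus 0 l + c.
Proof. induction l; simpl; [ring | rewrite IHl; ring]. Qed.

Lemma fold_sm (f : nat -> R) K : fold_right Rplus 0 (map f (seq 0 K)) = sm f K.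
Proof.
  induction K; [reflexivity|].
  rewrite seq_S, map_app, fold_right_app. simpl. rewrite fr_shift, IHK. ring.
Qed.

Lemma sm_ext f g K : (forall i, (i < K)%nat -> f i = g i) -> sm f K = sm g K.
Proof. induction K; intros H; simpl; [reflexivity|]. rewrite IHK, H; auto. Qed.

Lemma sm_le f g K : (forall i, (i < K)%nat -> f i <= g i) -> sm f K <= sm g K.
Proof. induction K; intros H; simpl; [lra|]. apply Rplus_le_compat; auto. Qed.

Lemma sm_plus f g K : sm (fun i => f i + g i) K = sm f K + sm g K.
Proof. induction K; simpl; [ring | rewrite IHK; ring]. Qed.

Lemma sm_scal c f K : sm (fun i => c * f i) K = c * sm f K.
Proof. induction K; simpl; [ring | rewrite IHK; ring]. Qed.

Lemma sm_zero K : sm (fun _ => 0) K = 0.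
Proof. induction K; simpl; [ring | rewrite IHK; ring]. Qed.

Lemma sm_nonneg f K : (forall i, (i < K)%nat -> 0 <= f i) -> 0 <= sm f K.
Proof. intros H. rewrite <- (sm_zero K). apply sm_le. auto. Qed.

Lemma sm_zero_tail f K d : (forall i, (K <= i)%nat -> f i = 0) -> sm f (K + d) = sm f K.
Proof.
  intros H; induction d.
  - rewrite Nat.add_0_r; reflexivity.
  - rewrite Nat.add_succ_r. simpl. rewrite IHd, H; [ring|lia].
Qed.

Lemma sm_front f K : sm f (S K) = f 0%nat + sm (fun i => f (S i)) K.
Proof. induction K; simpl in *; [ring|]. rewrite IHK. ring. Qed.

Lemma sm_refl f m : sm f (S m) = sm (fun i => f (m - i)%nat) (S m).
Proof.
  revert f; induction m; intros f.
  - simpl. reflexivity.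
  - rewrite (sm_front (fun i => f (S m - i)%nat)).
    replace (S m - 0)%nat with (S m) by lia.
    simpl (S m - S _)%nat.
    rewrite <- (IHm f). change (sm f (S (S m))) with (sm f (S m) + f (S m)). ring.
Qed.

Lemma sm_exch (G : nat -> nat -> R) K1 K2 :
  sm (fun i => sm (G i) K2) K1 = sm (fun j => sm (fun i => G i j) K1) K2.
Proof.
  induction K1; simpl.
  - rewrite sm_zero. reflexivity.
  - rewrite IHK1, <- sm_plus. reflexivity.
Qed.

Lemma sm_trunc g K K' : (K <= K')%nat ->
  sm (fun j => if (j <? K)%nat then g j else 0) K' = sm g K.
Proof.
  intros H. replace K' with (K + (K' - K))%nat by lia.
  rewrite sm_zero_tail.
  - apply sm_ext. intros i Hi. destruct (Nat.ltb_spec i K); [reflexivity| lia].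
  - intros i Hi. destruct (Nat.ltb_spec i K); [lia| reflexivity].
Qed.

Lemma tri_exch (F : nat -> nat -> R) n :
  sm (fun i => sm (F i) (S (n - i))) (S n) =
  sm (fun j => sm (fun i => F i j) (S (n - j))) (S n).
Proof.
  transitivity (sm (fun i => sm (fun j => if (j <? S (n - i))%nat then F i j else 0) (S n)) (S n)).
  { apply sm_ext; intros i Hi. rewrite sm_trunc; [reflexivity|lia]. }
  transitivity (sm (fun j => sm (fun i => if (i <? S (n - j))%nat then F i j else 0) (S n)) (S n)).
  2:{ apply sm_ext; intros j Hj. rewrite sm_trunc; [reflexivity|lia]. }
  rewrite sm_exch. apply sm_ext; intros j Hj. apply sm_ext; intros i Hi.
  destruct (Nat.ltb_spec j (S (n - i))), (Nat.ltb_spec i (S (n - j)));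
    try reflexivity; exfalso; lia.
Qed.
Notation lf := lag_factor.

Lemma lf0 x : lf x 0 = 1.
Proof. unfold lag_factor; simpl. field. Qed.

Lemma falling_S1 x k : falling x (S k) = x * falling (x - 1) k.
Proof.
  induction k. simpl; ring. change (falling x (S (S k))) with (falling x (S k) * (x - INR (S k))).
  rewrite IHk. simpl (falling (x-1) (S k)). rewrite S_INR. ring.
Qed.

Lemma form2 x k : lf x (S k) = lf x k * (x - INR k) / (INR k + 1).
Proof.
  unfold lag_factor. simpl (falling x (S k)). change (fact (S k)) with (S k * fact k)%nat.
  rewrite mult_INR, S_INR. field. split; [apply INR_fact_neq_0|].
  pose proof (pos_INR k); lra.
Qed.

Lemma form1 x k : lf x (S k) = x * lf (x - 1) k / (INR k + 1).
Proof.
  unfold lag_factor. rewrite falling_S1. change (fact (S k)) with (S k * fact k)%nat.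
  rewrite mult_INR, S_INR. field. split; [apply INR_fact_neq_0|].
  pose proof (pos_INR k); lra.
Qed.

Lemma pascal x k : lf (x + 1) (S k) = lf x (S k) + lf x k.
Proof.
  rewrite form1, form2. replace (x + 1 - 1) with x by ring.
  pose proof (pos_INR k). field. lra.
Qed.

Lemma helper2 a b c : 0 < c -> Rabs b <= c -> Rabs (a * b / c) <= Rabs a.
Proof.
  intros Hc Hb. unfold Rdiv. rewrite !Rabs_mult, Rabs_inv, (Rabs_pos_eq c) by lra.
  pose proof (Rabs_pos a). pose proof (Rabs_pos b).
  apply Rle_trans with (Rabs a * c * / c).
  - apply Rmult_le_compat_r. left; apply Rinv_0_lt_compat; lra.
    apply Rmult_le_compat_l; lra.
  - rewrite Rmult_assoc, Rinv_r by lra. lra.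
Qed.

Lemma F1 k : forall x, 0 <= x <= INR k -> Rabs (lf x k) <= 1.
Proof.
  induction k; intros x Hx.
  - rewrite lf0, Rabs_R1; lra.
  - pose proof (pos_INR k). rewrite S_INR in Hx.
    destruct (Rle_dec x (INR k)).
    + rewrite form2. eapply Rle_trans; [apply helper2|apply IHk]; try lra.
      rewrite Rabs_left1 by lra. lra.
    + apply Rnot_le_lt in n. destruct k.
      * rewrite form2, lf0. eapply Rle_trans; [apply helper2|]; simpl in *; try lra.
        rewrite Rabs_pos_eq by lra. lra. rewrite Rabs_R1; lra.
      * rewrite form1. rewrite Rmult_comm. rewrite S_INR in *. pose proof (pos_INR k).
        eapply Rle_trans; [apply helper2|apply IHk]; try lra.
        rewrite Rabs_pos_eq by lra. all: lra.
Qed.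

Lemma mono r a : 0 <= a <= 1 -> forall k, (k <= r)%nat ->
  0 <= lf (INR r + a) k <= lf (INR r + 1) k.
Proof.
  intros Ha k; induction k; intros Hk.
  - rewrite !lf0; lra.
  - assert (IH := IHk ltac:(lia)). rewrite !form2.
    assert (INR k + 1 <= INR r) by (rewrite <- S_INR; apply le_INR; lia).
    pose proof (pos_INR k).
    unfold Rdiv. split.
    + apply Rmult_le_pos; [apply Rmult_le_pos; lra|]. left; apply Rinv_0_lt_compat; lra.
    + apply Rmult_le_compat_r; [left; apply Rinv_0_lt_compat; lra|].
      apply Rmult_le_compat; lra.
Qed.

Lemma lf_nat_zero m k : (m < k)%nat -> lf (INR m) k = 0.
Proof.
  induction k; intros H; [lia|].
  rewrite form2. destruct (Nat.eq_dec m k).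
  - subst. unfold Rdiv. ring.
  - rewrite IHk by lia. unfold Rdiv; ring.
Qed.

Lemma lf_nat_nonneg m k : 0 <= lf (INR m) k.
Proof.
  destruct (le_lt_dec k m).
  - pose proof (mono m 0 ltac:(lra) k l). rewrite Rplus_0_r in H. lra.
  - rewrite lf_nat_zero by auto. lra.
Qed.

Lemma pascal_sum x K : sm (fun k => lf (x + 1) k) (S K) =
  sm (fun k => lf x k) (S K) + sm (fun k => lf x k) K.
Proof.
  induction K.
  - simpl. rewrite !lf0. ring.
  - change (sm (fun k => lf (x + 1) k) (S (S K))) with
      (sm (fun k => lf (x + 1) k) (S K) + lf (x+1) (S K)).
    rewrite IHK, pascal. simpl. ring.
Qed.

Lemma pow_sum m : forall K, sm (fun k => lf (INR m) k) K <= 2 ^ m.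
Proof.
  induction m; intros K.
  - simpl pow. induction K; simpl sm; [lra|].
    destruct K.
    + simpl. rewrite lf0. lra.
    + assert (Hz : lf 0 (S K) = 0) by (apply (lf_nat_zero 0); lia).
      change (INR 0) with 0 in *. rewrite Hz. lra.
  - destruct K; [pose proof (pow_lt 2 m ltac:(lra)); simpl; lra|].
    rewrite S_INR, pascal_sum. simpl pow.
    pose proof (IHm (S K)); pose proof (IHm K); lra.
Qed.

Lemma pow_ge r : INR r + 1 <= 2 ^ r.
Proof. induction r. simpl; lra. rewrite S_INR. change (2 ^ S r) with (2 * 2 ^ r). pose proof (pos_INR r). lra. Qed.

Lemma smS f K : sm f (S K) = sm f K + f K.
Proof. reflexivity. Qed.

Lemma SB r a K : 0 <= a <= 1 ->
  sm (fun k => Rabs (lf (INR r + a) k)) K <= 2 ^ (S r) + INR (K - S r).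
Proof.
  intros Ha.
  assert (H: sm (fun k => Rabs (lf (INR r + a) k)) K <=
             sm (fun k => lf (INR (S r)) k) K + INR (K - S r)).
  { induction K; [simpl; lra|]. rewrite !smS.
    destruct (le_lt_dec K r).
    - replace (S K - S r)%nat with (K - S r)%nat by lia.
      pose proof (mono r a Ha K l). rewrite S_INR in *.
      rewrite Rabs_pos_eq by lra. lra.
    - replace (S K - S r)%nat with (S (K - S r)) by lia. rewrite !S_INR in *.
      assert (Rabs (lf (INR r + a) K) <= 1).
      { apply F1. pose proof (pos_INR r). split; [lra|].
        assert (INR r + 1 <= INR K) by (rewrite <- S_INR; apply le_INR; lia). lra. }
      pose proof (lf_nat_nonneg (S r) K). rewrite S_INR in *. lra. }
  pose proof (pow_sum (S r) K). rewrite S_INR in *. lra.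
Qed.

Lemma Rabs_same_sign x y : 0 <= x * y -> Rabs (x + y) = Rabs x + Rabs y.
Proof.
  intros H. destruct (Rle_dec 0 x), (Rle_dec 0 y).
  - rewrite !Rabs_pos_eq by lra. ring.
  - destruct (Req_dec x 0). subst. rewrite Rabs_R0, !Rplus_0_l. ring.
    exfalso. nra.
  - destruct (Req_dec y 0). subst. rewrite Rabs_R0, !Rplus_0_r. ring.
    exfalso. nra.
  - rewrite !Rabs_left1 by lra. ring.
Qed.

Definition Bf (u v : R) (m i : nat) : R :=
  if (i <? m)%nat then lf (u - 1) i * lf v (m - 1 - i) else 0.
Definition Bmf (u v : R) (m i : nat) : R :=
  match i with O => 0 | S i' => Bf u v m i' end.
Definition Af (u v : R) (m i : nat) : R := lf (u - 1) i * lf v (m - i).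

Lemma onedim (u v : R) (m : nat) :
  sm (fun i => Rabs (lf (u - 1) i * lf (v + 1) (m - i))) (S m) <=
  sm (fun i => Rabs (lf u i * lf v (m - i))) (S m) +
  sm (fun i => if Rlt_dec u (INR i) then 2 * Rabs (lf (u - 1) i * lf v (m - i)) else 0) (S m).
Proof.
  assert (Hnew: forall i, (i <= m)%nat ->
     lf (u-1) i * lf (v+1) (m-i) = Af u v m i + Bf u v m i).
  { intros i Hi. unfold Af, Bf. destruct (Nat.ltb_spec i m).
    - replace (m - i)%nat with (S (m - 1 - i)) by lia. rewrite pascal. ring.
    - replace i with m by lia. rewrite Nat.sub_diag, !lf0. ring. }
  assert (Hold: forall i, (i <= m)%nat ->
     lf u i * lf v (m-i) = Af u v m i + Bmf u v m i).
  { intros i Hi. unfold Af, Bmf. destruct i.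
    - rewrite !lf0. ring.
    - unfold Bf. destruct (Nat.ltb_spec i m); [|lia].
      replace (m - 1 - i)%nat with (m - S i)%nat by lia.
      assert (E: lf u (S i) = lf (u - 1) (S i) + lf (u-1) i).
      { rewrite <- pascal. f_equal. ring. }
      rewrite E. ring. }
  assert (Htel: forall K, sm (fun i => Rabs (Bf u v m i) - Rabs (Bmf u v m i)) (S K) = Rabs (Bf u v m K)).
  { induction K.
    - simpl. rewrite Rabs_R0. ring.
    - rewrite smS, IHK. simpl Bmf. ring. }
  assert (Hterm: forall i, (i <= m)%nat ->
     Rabs (Af u v m i + Bf u v m i) <=
     Rabs (Af u v m i + Bmf u v m i) + (Rabs (Bf u v m i) - Rabs (Bmf u v m i)) +
     (if Rlt_dec u (INR i) then 2 * Rabs (Af u v m i) else 0)).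
  { intros i Hi. pose proof (Rabs_triang (Af u v m i) (Bf u v m i)).
    destruct (Rlt_dec u (INR i)).
    - pose proof (Rabs_triang (Af u v m i + Bmf u v m i) (- Af u v m i)).
      replace (Af u v m i + Bmf u v m i + - Af u v m i) with (Bmf u v m i) in H0 by ring.
      rewrite Rabs_Ropp in H0. lra.
    - rewrite (Rabs_same_sign (Af u v m i) (Bmf u v m i)). lra.
      destruct i.
      + simpl. lra.
      + unfold Af, Bmf, Bf. destruct (Nat.ltb_spec i m); [|lia].
        replace (m - 1 - i)%nat with (m - S i)%nat by lia.
        rewrite form2. apply Rnot_lt_le in n. rewrite S_INR in n.
        pose proof (pos_INR i).
        replace (lf (u - 1) i * (u - 1 - INR i) / (INR i + 1) * lf v (m - S i) *
                 (lf (u - 1) i * lf v (m - S i)))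
          with ((u - 1 - INR i) / (INR i + 1) * (lf (u - 1) i * lf v (m - S i)) ^ 2)
          by (unfold Rdiv; ring).
        apply Rmult_le_pos; [|apply pow2_ge_0].
        unfold Rdiv. apply Rmult_le_pos; [lra|]. left; apply Rinv_0_lt_compat; lra. }
  transitivity (sm (fun i => Rabs (Af u v m i + Bf u v m i)) (S m)).
  { right. apply sm_ext. intros i Hi. rewrite Hnew by lia. reflexivity. }
  eapply Rle_trans. { apply sm_le. intros i Hi. apply Hterm. lia. }
  rewrite !sm_plus, Htel.
  assert (HB: Bf u v m m = 0) by (unfold Bf; rewrite Nat.ltb_irrefl; reflexivity).
  rewrite HB, Rabs_R0, Rplus_0_r.
  apply Rplus_le_compat; right; apply sm_ext; intros i Hi.
  - rewrite Hold by lia. reflexivity.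
  - reflexivity.
Qed.

Definition LF (n : nat) (y1 y2 y3 : R) : R :=
  sm (fun i1 => sm (fun i2 => Rabs (lf y1 i1 * lf y2 i2 * lf y3 (n - i1 - i2)%nat))
                   (S (n - i1))) (S n).

Lemma leb_LF n y1 y2 y3 : INR n <> 0 ->
  lebesgue_fun n (y1 / INR n) (y2 / INR n) (y3 / INR n) = LF n y1 y2 y3.
Proof.
  intros Hn. unfold lebesgue_fun, LF, lagrange_fund.
  replace (INR n * (y1 / INR n)) with y1 by (field; auto).
  replace (INR n * (y2 / INR n)) with y2 by (field; auto).
  replace (INR n * (y3 / INR n)) with y3 by (field; auto).
  rewrite fold_sm. apply sm_ext; intros i Hi. rewrite fold_sm. reflexivity.
Qed.

Lemma LF_reorg n y1 y2 y3 : LF n y1 y2 y3 =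
  sm (fun j => Rabs (lf y2 j) * sm (fun i => Rabs (lf y1 i * lf y3 (n - j - i)%nat)) (S (n - j))) (S n).
Proof.
  unfold LF.
  etransitivity.
  { apply (tri_exch (fun i1 i2 => Rabs (lf y1 i1 * lf y2 i2 * lf y3 (n - i1 - i2)%nat))). }
  apply sm_ext; intros j Hj. rewrite <- sm_scal. apply sm_ext; intros i Hi.
  replace (n - i - j)%nat with (n - j - i)%nat by lia. rewrite !Rabs_mult. ring.
Qed.

Lemma step n x1 x2 x3 :
  LF n (x1 - 1) x2 (x3 + 1) <= LF n x1 x2 x3 +
  sm (fun j => Rabs (lf x2 j) * sm (fun i => if Rlt_dec x1 (INR i)
        then 2 * Rabs (lf (x1 - 1) i * lf x3 (n - j - i)) else 0) (S (n - j))) (S n).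
Proof.
  rewrite !LF_reorg, <- sm_plus. apply sm_le; intros j _.
  rewrite <- Rmult_plus_distr_l. apply Rmult_le_compat_l; [apply Rabs_pos|].
  apply (onedim x1 x3 (n - j)).
Qed.

Lemma div_le u c w : 0 < c -> u <= w * c -> u / c <= w.
Proof.
  intros Hc H. unfold Rdiv. apply (Rmult_le_reg_r c); [auto|].
  rewrite Rmult_assoc, Rinv_l, Rmult_1_r by lra. exact H.
Qed.

Lemma Lb_base p b : 0 <= b <= 1 ->
  Rabs (lf (INR p + b) (S (S p))) <= / (4 * (INR p + 2)).
Proof.
  intros Hb. induction p.
  - rewrite form2, form2, lf0. simpl INR.
    replace (1 * (0 + b - 0) / (0 + 1) * (0 + b - 1) / (1 + 1)) with (b * (b - 1) / 2)
      by field.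
    apply Rabs_le. split.
    + apply Rle_trans with (- (1/8)). replace (/ (4 * (0 + 2))) with (1/8) by field. lra.
      unfold Rdiv. pose proof (Rle_0_sqr (b - /2)) as Hs. unfold Rsqr in Hs. nra.
    + replace (/ (4 * (0 + 2))) with (1/8) by field. unfold Rdiv. nra.
  - rewrite form1. replace (INR (S p) + b - 1) with (INR p + b) by (rewrite S_INR; ring).
    set (X := lf (INR p + b) (S (S p))) in *.
    pose proof (pos_INR p).
    rewrite !S_INR.
    unfold Rdiv. rewrite !Rabs_mult, Rabs_inv, (Rabs_pos_eq (INR p + 1 + b)) by lra.
    rewrite (Rabs_pos_eq (INR p + 1 + 1 + 1)) by lra.
    assert (H1: (INR p + 2) * Rabs X <= / 4).
    { apply Rle_trans with ((INR p + 2) * / (4 * (INR p + 2))).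
      apply Rmult_le_compat_l; lra. right. field. lra. }
    pose proof (Rabs_pos X).
    assert (H2: (INR p + 1 + b) * Rabs X <= / 4) by nra.
    apply Rle_trans with (/ 4 * / (INR p + 1 + 1 + 1)).
    + apply Rmult_le_compat_r; [left; apply Rinv_0_lt_compat; lra | exact H2].
    + right. field. lra.
Qed.

Lemma Lb p b : 0 <= b <= 1 -> forall d,
  Rabs (lf (INR p + b) (p + 2 + d)) <= / (4 * (INR p + 2)).
Proof.
  intros Hb d. induction d.
  - replace (p + 2 + 0)%nat with (S (S p)) by lia. apply Lb_base; auto.
  - replace (p + 2 + S d)%nat with (S (p + 2 + d)) by lia. rewrite form2.
    eapply Rle_trans; [apply helper2|exact IHd].
    + pose proof (pos_INR (p + 2 + d)); lra.
    + assert (INR p + 1 <= INR (p + 2 + d)) by (rewrite <- S_INR; apply le_INR; lia).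
      pose proof (pos_INR p).
      rewrite Rabs_left1 by lra. lra.
Qed.

Lemma Gbound (n NN r1 : nat) (x1 x2 x3 M : R) :
  n = (NN + r1)%nat -> (1 <= r1)%nat -> 0 <= M ->
  (forall i, x1 < INR i -> Rabs (lf (x1 - 1) i) <= M /\ (r1 <= i)%nat) ->
  sm (fun j => Rabs (lf x2 j) * sm (fun i => if Rlt_dec x1 (INR i)
        then 2 * Rabs (lf (x1 - 1) i * lf x3 (n - j - i)) else 0) (S (n - j))) (S n)
  <= 2 * M * sm (fun j => Rabs (lf x2 j)) (S NN) * sm (fun k => Rabs (lf x3 k)) (S NN).
Proof.
  intros Hn Hr1 HM0 HM.
  set (S3 := sm (fun k => Rabs (lf x3 k)) (S NN)).
  assert (HS3 : 0 <= S3) by (apply sm_nonneg; intros; apply Rabs_pos).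
  assert (inner : forall j, sm (fun i => if Rlt_dec x1 (INR i)
        then 2 * Rabs (lf (x1 - 1) i * lf x3 (n - j - i)) else 0) (S (n - j))
        <= 2 * M * (if (j <=? NN)%nat then S3 else 0)).
  { intros j.
    apply Rle_trans with (sm (fun i => 2 * M * (if (r1 <=? i)%nat then Rabs (lf x3 (n - j - i)) else 0)) (S (n - j))).
    { apply sm_le; intros i Hi. destruct (Rlt_dec x1 (INR i)) as [h|h].
      - destruct (HM i h) as [HM1 Hr]. rewrite (proj2 (Nat.leb_le _ _) Hr).
        rewrite Rabs_mult. pose proof (Rabs_pos (lf (x1 - 1) i)).
        pose proof (Rabs_pos (lf x3 (n - j - i))). nra.
      - destruct (r1 <=? i)%nat; [pose proof (Rabs_pos (lf x3 (n - j - i))); nra | lra]. }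
    rewrite sm_scal. apply Rmult_le_compat_l; [lra|].
    destruct (Nat.leb_spec j NN).
    - rewrite sm_refl.
      set (h := fun k => if (r1 <=? (n - j) - k)%nat then Rabs (lf x3 k) else 0).
      transitivity (sm h (S (n - j))).
      { right. apply sm_ext. intros k Hk. unfold h.
        replace (n - j - (n - j - k))%nat with k by lia. reflexivity. }
      assert (Hz1 : forall k, (S (n - j) <= k)%nat -> h k = 0).
      { intros k Hk. unfold h. destruct (Nat.leb_spec r1 (n - j - k)); [lia|reflexivity]. }
      assert (Hz2 : forall k, (S NN <= k)%nat -> h k = 0).
      { intros k Hk. unfold h. destruct (Nat.leb_spec r1 (n - j - k)); [lia|reflexivity]. }
      rewrite <- (sm_zero_tail h (S (n - j)) (S NN)) by auto.
      rewrite Nat.add_comm, (sm_zero_tail h (S NN) (S (n - j))) by auto.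
      apply sm_le. intros k Hk. unfold h. destruct (r1 <=? n - j - k)%nat.
      + lra.
      + apply Rabs_pos.
    - transitivity (sm (fun _ => 0) (S (n - j))).
      { right. apply sm_ext. intros i Hi. destruct (Nat.leb_spec r1 i); [lia|reflexivity]. }
      rewrite sm_zero. lra. }
  eapply Rle_trans.
  { apply sm_le. intros j Hj. apply Rmult_le_compat_l; [apply Rabs_pos|]. apply (inner j). }
  transitivity (sm (fun j => (2 * M * S3) * (if (j <=? NN)%nat then Rabs (lf x2 j) else 0)) (S n)).
  { right. apply sm_ext. intros j Hj. destruct (j <=? NN)%nat; ring. }
  rewrite sm_scal.
  replace (S n) with (S NN + r1)%nat by lia.
  rewrite sm_zero_tail.
  2:{ intros j Hj. destruct (Nat.leb_spec j NN); [lia|reflexivity]. }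
  right. replace (sm (fun j => if (j <=? NN)%nat then Rabs (lf x2 j) else 0) (S NN))
     with (sm (fun j => Rabs (lf x2 j)) (S NN)).
  fold S3. ring.
  apply sm_ext. intros j Hj. destruct (Nat.leb_spec j NN); [reflexivity|lia].
Qed.

Theorem lemma14 (n r1 r2 r3 : nat) (a1 a2 a3 : R) :
  (4 <= n)%nat ->
  (r1 + r2 + r3 = n - 1)%nat ->
  -1 < a1 < 1 -> 0 <= a2 < 1 -> 0 <= a3 < 1 ->
  a1 + a2 + a3 = 1 ->
  INR r1 - 1 + a1 >= INR r2 + a2 ->
  INR r1 - 1 + a1 >= INR r3 + 1 + a3 ->
  frakL n (r1 - 1) r2 (r3 + 1) a1 a2 a3 <=
    frakL n r1 r2 r3 a1 a2 a3 + 2 ^ (r2 + r3 + 2) + 2 ^ r2 / INR r1 - 1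
    + match r2 with
      | O => 2 ^ (r3 + 1) * ln (INR n)
      | S _ => 2 ^ r3
      end.
Proof.
  intros Hn Hsum Ha1 Ha2 Ha3 Hasum H1 H2.
  assert (Hr2 : (r2 < r1)%nat) by (apply INR_lt; lra).
  assert (Hr3 : (S r3 < r1)%nat) by (apply INR_lt; rewrite S_INR; lra).
  assert (HnN : n = (r2 + r3 + 1 + r1)%nat) by lia.
  assert (HnR : INR n <> 0) by (apply not_0_INR; lia).
  unfold frakL. rewrite !leb_LF by exact HnR.
  rewrite minus_INR by lia. rewrite plus_INR.
  replace (INR r1 - INR 1 + a1) with ((INR r1 + a1) - 1) by (simpl; ring).
  replace (INR r3 + INR 1 + a3) with ((INR r3 + a3) + 1) by (simpl; ring).
  eapply Rle_trans. { apply step. }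
  set (M := / (4 * INR r1)).
  assert (HR1 : 2 <= INR r1) by (change 2 with (INR 2); apply le_INR; lia).
  assert (HM0 : 0 < M) by (unfold M; apply Rinv_0_lt_compat; lra).
  assert (HMi : forall i, INR r1 + a1 < INR i ->
            Rabs (lf (INR r1 + a1 - 1) i) <= M /\ (r1 <= i)%nat).
  { intros i Hi. split.
    - destruct (Rle_dec 0 a1).
      + assert (Hri : (r1 < i)%nat) by (apply INR_lt; lra).
        replace (INR r1 + a1 - 1) with (INR (r1 - 1) + a1) by (rewrite minus_INR by lia; simpl; ring).
        replace i with (r1 - 1 + 2 + (i - r1 - 1))%nat by lia.
        eapply Rle_trans. { apply Lb; lra. }
        unfold M. apply Rinv_le_contravar; [lra|].
        rewrite minus_INR by lia. simpl. lra.
      + assert (Hri : (r1 <= i)%nat) by (apply Nat.lt_succ_r; apply INR_lt; rewrite S_INR; lra).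
        replace (INR r1 + a1 - 1) with (INR (r1 - 2) + (1 + a1)) by (rewrite minus_INR by lia; simpl; ring).
        replace i with (r1 - 2 + 2 + (i - r1))%nat by lia.
        eapply Rle_trans. { apply Lb; lra. }
        unfold M. right. f_equal. rewrite minus_INR by lia. simpl. ring.
    - apply Nat.lt_succ_r; apply INR_lt; rewrite S_INR; lra. }
  match goal with |- _ + ?G <= _ => assert (HG : G <= 2 ^ (r2 + r3 + 2)) end.
  { eapply Rle_trans.
    { apply (Gbound n (r2 + r3 + 1) r1 (INR r1 + a1) (INR r2 + a2) (INR r3 + a3) M HnN
               ltac:(lia) ltac:(lra) HMi). }
    pose proof (SB r2 a2 (S (r2 + r3 + 1)) ltac:(lra)) as S2.
    pose proof (SB r3 a3 (S (r2 + r3 + 1)) ltac:(lra)) as S3.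
    replace (S (r2 + r3 + 1) - S r2)%nat with (S r3) in S2 by lia.
    replace (S (r2 + r3 + 1) - S r3)%nat with (S r2) in S3 by lia.
    rewrite S_INR in S2, S3.
    set (T2 := sm (fun j => Rabs (lf (INR r2 + a2) j)) (S (r2 + r3 + 1))) in *.
    set (T3 := sm (fun j => Rabs (lf (INR r3 + a3) j)) (S (r2 + r3 + 1))) in *.
    assert (T2p : 0 <= T2) by (apply sm_nonneg; intros; apply Rabs_pos).
    assert (T3p : 0 <= T3) by (apply sm_nonneg; intros; apply Rabs_pos).
    replace (r2 + r3 + 2)%nat with (S r2 + S r3)%nat by lia. rewrite pow_add.
    set (A := 2 ^ S r2) in *. set (B := 2 ^ S r3) in *.
    assert (HA : 2 * (INR r2 + 1) <= A) by (unfold A; simpl; pose proof (pow_ge r2); lra).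
    assert (HB : 2 * (INR r3 + 1) <= B) by (unfold B; simpl; pose proof (pow_ge r3); lra).
    assert (Hr2R : INR r2 + 1 <= INR r1) by (rewrite <- S_INR; apply le_INR; lia).
    assert (Hr3R : INR r3 + 2 <= INR r1).
    { replace (INR r3 + 2) with (INR (S (S r3))) by (rewrite !S_INR; ring). apply le_INR; lia. }
    pose proof (pos_INR r2). pose proof (pos_INR r3).
    assert (K1 : A * (INR r2 + 1) <= A * B * (INR r2 + 1) / 2).
    { assert (0 <= (B - 2) * (A * (INR r2 + 1))) by (apply Rmult_le_pos; [lra| apply Rmult_le_pos; lra]). lra. }
    assert (K2 : B * (INR r3 + 1) <= A * B * (INR r3 + 1) / 2).
    { assert (0 <= (A - 2) * (B * (INR r3 + 1))) by (apply Rmult_le_pos; [lra| apply Rmult_le_pos; lra]). lra. }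
    assert (K3 : (INR r2 + 1) * (INR r3 + 1) <= A * B / 4).
    { assert ((INR r2 + 1) * (INR r3 + 1) <= (A / 2) * (B / 2)) by (apply Rmult_le_compat; lra).
      lra. }
    assert (K4 : (A + (INR r3 + 1)) * (B + (INR r2 + 1)) <= 2 * INR r1 * (A * B)).
    { assert (0 <= A * B) by (apply Rmult_le_pos; lra).
      assert ((INR r2 + INR r3 + 3) * (A * B) <= 2 * INR r1 * (A * B)) by (apply Rmult_le_compat_r; lra).
      assert (E: (A + (INR r3 + 1)) * (B + (INR r2 + 1)) = A*B + A*(INR r2+1) + B*(INR r3+1) + (INR r2+1)*(INR r3+1)) by ring.
      assert (0 <= A * B * INR r2) by (apply Rmult_le_pos; lra).
      assert (0 <= A * B * INR r3) by (apply Rmult_le_pos; lra).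
      rewrite E. lra. }
    assert (K5 : T2 * T3 <= (A + (INR r3 + 1)) * (B + (INR r2 + 1)))
      by (apply Rmult_le_compat; lra).
    assert (K6 : M * (4 * INR r1) = 1) by (unfold M; field; lra).
    assert (0 <= A * B) by (apply Rmult_le_pos; lra).
    apply Rle_trans with (2*M*((A + (INR r3+1))*(B + (INR r2+1)))).
    { replace (2*M*T2*T3) with (2*M*(T2*T3)) by ring. apply Rmult_le_compat_l; lra. }
    apply Rle_trans with (2*M*(2*INR r1*(A*B))). { apply Rmult_le_compat_l; lra. }
    right. replace (2*M*(2*INR r1*(A*B))) with (M*(4*INR r1)*(A*B)) by ring. rewrite K6; ring. }
  assert (Hextra : 0 <= 2 ^ r2 / INR r1 - 1 + match r2 with
      | O => 2 ^ (r3 + 1) * ln (INR n)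
      | S _ => 2 ^ r3
      end).
  { assert (0 < 2 ^ r2 / INR r1) by (apply Rdiv_lt_0_compat; [apply pow_lt; lra | lra]).
    destruct r2 as [|r2'].
    - assert (Hl : 1 <= ln (INR n)).
      { assert (INR 4 <= INR n) by (apply le_INR; lia). simpl in H0.
        pose proof exp_le_3.
        assert (ln (exp 1) < ln (INR n)) by (apply ln_increasing; [apply exp_pos | lra]).
        rewrite ln_exp in H4. lra. }
      pose proof (pow_ge (r3 + 1)). pose proof (pos_INR (r3 + 1)).
      assert (1 * 1 <= 2 ^ (r3 + 1) * ln (INR n)) by (apply Rmult_le_compat; lra). lra.
    - pose proof (pow_ge r3). pose proof (pos_INR r3). lra. }
  lra.
Qed.
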